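(* Let $k\ge 3$ and consider $k$ processes $P_0,\dots,P_{k-1}$ (with distinct ids $0,\dots,k-1$) with inputs $v_0,\dots,v_{k-1}$, running the following algorithm on a single shared $\text{WRN}_{k}$ object: process $P_i$ performs $t\gets\texttt{WRN}(i,v_i)$ and then decides $t$ if $t\neq\bot$, and decides $v_i$ otherwise. This algorithm solves the $(k-1)$-set consensus task for these $k$ processes (wait-free).
   Context: A $\text{WRN}_{k}$ (Write and Read Next) object is a deterministic atomic shared object with a single operation $\texttt{WRN}(i,v)$, where $i\in\{0,\dots,k-1\}$ and $v\neq\bot$. Its state consists of $k$ values $A[0],\dots,A[k-1]$, initially all $\bot$; the operation $\texttt{WRN}(i,v)$ atomically sets $A[i]\gets v$ and returns $A[(i+1)\bmod k]$. Model: asynchronous shared memory; processes may crash. The $m$-set consensus task: each process has an input and every non-faulty process must output, within a finite number of its own steps, a value such that every output is the input of some process and there are at most $m$ different output values. *)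

(* Defs.v *)
From mathcomp Require Import all_boot.
Set Implicit Arguments. Unset Strict Implicit. Unset Printing Implicit Defensive.

(* The WRN_k object: state A[0..k-1], each entry either bot (None) or a value. *)
Definition wrn_state (k : nat) (V : Type) := 'I_k -> option V.

Definition wrn_init (k : nat) (V : Type) : wrn_state k V := fun _ => None.

Definition WRN (k : nat) (V : Type) (A : wrn_state k V) (i : 'I_k) (x : V)
  : option V * wrn_state k V :=
  (A (ordS i), fun j => if j == i then Some x else A j).

(* Configuration during an execution: object state and, for each process,
   the response of its WRN operation (meaningful once it has taken its step). *)
Definition config (k : nat) (V : Type) := (wrn_state k V * ('I_k -> option V))%type.

Definition step (k : nat) (V : Type) (v : 'I_k -> V) (c : config k V) (p : 'I_k)
  : config k V :=
  let (t, A') := WRN c.1 p (v p) in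
  (A', fun q => if q == p then t else c.2 q).

(* An execution is given by the (linearization) order [s] of the WRN steps
   actually taken; processes not in [s] crashed before taking their step. *)
Definition exec (k : nat) (V : Type) (v : 'I_k -> V) (s : seq 'I_k) : config k V :=
  foldl (@step k V v) (@wrn_init k V, fun _ => None) s.

Definition decision (k : nat) (V : Type) (v : 'I_k -> V) (s : seq 'I_k) (p : 'I_k) : V :=
  match (exec v s).2 p with Some t => t | None => v p end.

(* Main.v *)
Require Import Defs.
From mathcomp Require Import all_boot.

Lemma exec_rcons k (V : eqType) (v : 'I_k -> V) s x :
  exec v (rcons s x) = step v (exec v s) x.
Proof. by rewrite /exec foldl_rcons. Qed.

Lemma exec1 k (V : eqType) (v : 'I_k -> V) s j :
  (exec v s).1 j = if j \in s then Some (v j) else None.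
Proof.
elim/last_ind: s => [|s x IH] //.
rewrite exec_rcons /step /WRN /= IH mem_rcons in_cons.
by case: eqP => [->|].
Qed.

Lemma exec2 k (V : eqType) (v : 'I_k -> V) s1 p s2 : p \notin s2 ->
  (exec v (s1 ++ p :: s2)).2 p = (exec v s1).1 (ordS p).
Proof.
elim/last_ind: s2 => [|s2 x IH].
  by move=> _; rewrite cats1 exec_rcons /step /WRN /= eqxx.
rewrite mem_rcons in_cons negb_or => /andP [px pn].
rewrite -rcons_cons -rcons_cat exec_rcons /step /WRN /=.
by rewrite (negbTE px) IH || by rewrite eq_sym (negbTE px) IH || (rewrite ifN_eq 1?eq_sym // IH).
Qed.

Theorem corollary9 (k : nat) (hk : 3 <= k) (V : eqType) (v : 'I_k -> V)
  (s : seq 'I_k) (D : seq 'I_k) :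
  uniq s -> {subset D <= s} ->
  (forall p, p \in D -> exists j : 'I_k, decision v s p = v j) /\
  size (undup [seq decision v s p | p <- D]) <= k.-1.
Proof.
move=> us sD; split.
  move=> p /sD ps; move: us; case/splitPr: ps => s1 s2.
  rewrite cat_uniq /= => /and3P [_ _ /andP [pn _]].
  rewrite /decision exec2 // exec1; case: ifP => _; [by exists (ordS p) | by exists p].
case: s us sD => [|p0 s'] us sD.
  by case: D sD => [|x D] // /(_ x); rewrite mem_head => /(_ isT).
set r := ord_pred p0.
have rp0 : r != p0.
  apply/eqP => e; have := ord_predK p0; rewrite -/r e => /(congr1 val) /=.
  have := ltn_ord p0; case: (ltngtP p0.+1 k) => [h _|//|h _].
    by rewrite modn_small // => /eqP; rewrite -[X in _ == X]addn0 -addn1 eqn_add2l.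
  by rewrite h modnn => e0; move: h hk; rewrite -e0 => <-.
have dp0 : decision v (p0 :: s') p0 = v p0.
  rewrite /decision -[p0 :: s']cat0s exec2 ?exec1 //.
  by move: us => /= /andP [].
have dr : r \in s' -> decision v (p0 :: s') r = v p0.
  move=> rs; move: us; case/splitPr: rs => s1 s2.
  rewrite -cat_cons cat_uniq /= => /and3P [_ _ /andP [pn _]].
  by rewrite /decision -cat_cons exec2 // exec1 /r ord_predK mem_head.
set T := [seq decision v (p0 :: s') q | q <- enum 'I_k & q != r].
apply: (@leq_trans (size T)).
  apply: uniq_leq_size; first exact: undup_uniq.
  move=> x; rewrite mem_undup => /mapP [p pD ->].
  case: (eqVneq p r) => [epr|npr].
    have : p \in p0 :: s' by apply: sD.
    rewrite in_cons epr (negbTE rp0) /= => rs.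
    rewrite dr // -dp0; apply: map_f.
    by rewrite mem_filter eq_sym rp0 mem_enum.
  by apply: map_f; rewrite mem_filter npr mem_enum.
rewrite size_map size_filter.
have h1 := count_predC (pred1 r) (enum 'I_k).
have h2 : count (pred1 r) (enum 'I_k) = 1.
  by rewrite (count_uniq_mem r (enum_uniq 'I_k)) mem_enum.
have h3 : size (enum 'I_k) = k by rewrite size_enum_ord.
rewrite h2 h3 add1n in h1.
have -> : k.-1 = count (predC (pred1 r)) (enum 'I_k) by rewrite -[in LHS]h1.
by [].
Qed.
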